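(* Let $m$, $t$, $c$, $\beta$, $\mathcal{C}_{\mathrm{MU}}$ and the markers be as in the context. A uniformly random string $\mathbf{z}\in\{0,1\}^m$ is legit with probability $1-1/\operatorname{poly}(m)$.
   Context: Logarithms are base 2. Let $t\ge1$ and $m>t$ be integers, let $c\ge 3$ be an integer, and let $\beta=32$. A mutually uncorrelated (MU) code is a set of binary strings of equal length such that no nonempty proper prefix of any codeword equals a suffix of any (possibly the same) codeword. Let $\mathcal{C}_{\mathrm{MU}}$ be an MU code of length $c\log m$ with $|\mathcal{C}_{\mathrm{MU}}|\ge \frac{2^{c\log m}}{\beta c\log m}$. The markers $\mathbf{m}_0,\ldots,\mathbf{m}_t$ are the $t+1$ lexicographically first codewords of $\mathcal{C}_{\mathrm{MU}}$. For $\mathbf{z}\in\{0,1\}^m$, any occurrence (as a contiguous substring) of a codeword of $\mathcal{C}_{\mathrm{MU}}$ in $\mathbf{z}$ is called a level-$0$ signature. A string $\mathbf{z}\in\{0,1\}^m$ is legit if: (I) every interval (contiguous substring) of $\mathbf{z}$ of length $2\beta c\log^2 m+c\log m-1$ contains a level-$0$ signature; (II) every two non-overlapping substrings of $\mathbf{z}$ of length $c\log m$ are distinct; (III) $\mathbf{z}$ contains none of the markers $\mathbf{m}_0,\ldots,\mathbf{m}_t$ as a substring. *)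

(* Defs.v *)
From mathcomp Require Import all_boot.
Set Implicit Arguments. Unset Strict Implicit. Unset Printing Implicit Defensive.

(* log m (base 2), rounded up so that c * log m is an integer length. *)
Definition lg (m : nat) : nat := up_log 2 m.

Definition beta : nat := 32.

Definition sub (z : seq bool) (i n : nat) : seq bool := take n (drop i z).

Fixpoint lexlt (u v : seq bool) : bool :=
  match u, v with
  | x :: u', y :: v' => (~~ x && y) || ((x == y) && lexlt u' v')
  | [::], _ :: _ => true
  | _, _ => false
  end.

Definition mu_code (n : nat) (C : seq (seq bool)) : bool :=
  all (fun u => all (fun v =>
    all (fun k => (0 < k) ==> (take k u != drop (n - k) v)) (iota 0 n)) C) C.

(* w is one of the markers m_0..m_t, i.e. one of the t+1 lexicographically
   first codewords of C: w is a codeword with at most t codewords below it. *)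
Definition is_marker (C : seq (seq bool)) (t : nat) (w : seq bool) : bool :=
  (w \in C) && (count (fun u => lexlt u w) C <= t).

Definition ell (c m : nat) : nat := 2 * beta * c * (lg m) ^ 2 + c * lg m - 1.

Definition legit (c m t : nat) (C : seq (seq bool)) (z : seq bool) : bool :=
  let n := c * lg m in
  let L := ell c m in
  [&& (* (I) every interval of length L contains a level-0 signature *)
      all (fun i => (i + L <= size z) ==>
             has (fun j => (j + n <= L) && (sub z (i + j) n \in C)) (iota 0 L))
          (iota 0 (size z).+1),
      all (fun i => all (fun j => ((i + n <= j) && (j + n <= size z)) ==>
             (sub z i n != sub z j n)) (iota 0 (size z).+1)) (iota 0 (size z).+1)
    &
      all (fun i => (i + n <= size z) ==> ~~ is_marker C t (sub z i n))
          (iota 0 (size z).+1)].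

(* Main.v *)
Require Import Defs.
From mathcomp Require Import all_boot.
From Stdlib Require Import NArith.
From mathcomp Require Import all_boot all_algebra.
From mathcomp Require Import zify ring.
Set Implicit Arguments. Unset Strict Implicit. Unset Printing Implicit Defensive.

Fixpoint aw (n : nat) : seq (seq bool) :=
  match n with
  | 0 => [:: [::]]
  | n'.+1 => map (cons false) (aw n') ++ map (cons true) (aw n')
  end.

Definition cntw n (P : pred (seq bool)) := count P (aw n).

Lemma size_aw n : size (aw n) = 2 ^ n.
Proof. elim: n => [|n IH] //=; by rewrite size_cat !size_map IH expnS mul2n addnn. Qed.

Lemma cons_inj (b : bool) : injective (cons b).
Proof. by move=> x y []. Qed.

Lemma mem_aw n w : (w \in aw n) = (size w == n).
Proof.
elim: n w => [|n IH] [|b w] //=; rewrite mem_cat.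
- by apply/negP => /orP [] /mapP [].
- rewrite eqSS -IH; case: b.
  + rewrite (mem_map (@cons_inj true)).
    by apply/orP/idP => [[/mapP [? _] //|//]|]; right.
  + rewrite (mem_map (@cons_inj false)).
    by apply/orP/idP => [[//|/mapP [? _] //]|]; left.
Qed.

Lemma uniq_aw n : uniq (aw n).
Proof.
elim: n => [|n IH] //=; rewrite cat_uniq !(map_inj_uniq (@cons_inj _)) IH /=.
rewrite andbT; apply/hasPn => x /mapP [y _ ->]; apply/negP => /mapP [z _] //.
Qed.

Lemma cntw_predT n : cntw n predT = 2 ^ n.
Proof. by rewrite /cntw count_predT size_aw. Qed.

Lemma cntw_prod a b (P Q : pred (seq bool)) :
  cntw (a + b) (fun z => P (take a z) && Q (drop a z)) = cntw a P * cntw b Q.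
Proof.
rewrite /cntw; elim: a P => [|a IH] P /=.
- rewrite add0n (@eq_count _ _ (fun z => P [::] && Q z)); last by move=> z; rewrite take0 drop0.
  by case: (P [::]) => /=; rewrite ?mul1n ?mul0n // -(count_pred0 (aw b)).
- rewrite /= !count_cat !count_map mulnDl.
  rewrite -(IH (fun z => P (false :: z))) -(IH (fun z => P (true :: z))).
  by [].
Qed.

Definition seg := (nat * nat * pred (seq bool))%type.

Fixpoint cyl (s : seq seg) (z : seq bool) : bool :=
  if s is (g, l, A) :: s' then A (take l (drop g z)) && cyl s' (drop (g + l) z) else true.
Fixpoint tot (s : seq seg) : nat := if s is (g, l, _) :: s' then g + l + tot s' else 0.
Fixpoint lens (s : seq seg) : nat := if s is (_, l, _) :: s' then l + lens s' else 0.
Fixpoint prodc (s : seq seg) : nat := if s is (_, l, A) :: s' then cntw l A * prodc s' else 1.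

Lemma cyl_count s m : tot s <= m -> cntw m (cyl s) * 2 ^ lens s = prodc s * 2 ^ m.
Proof.
elim: s m => [|[[g l] A] s IH] m /= h.
- by rewrite muln1 mul1n -cntw_predT.
- set r := m - (g + l).
  have Hm : m = g + (l + r) by rewrite /r; lia.
  have hr : tot s <= r by rewrite /r; lia.
  have -> : cntw m (cyl ((g, l, A) :: s)) =
     cntw (g + (l + r)) (fun z => predT (take g z) &&
          (fun y => A (take l y) && cyl s (drop l y)) (drop g z)).
    by rewrite -Hm; apply: eq_count => z /=; rewrite drop_drop addnC.
  rewrite (@cntw_prod g (l + r) predT (fun y => A (take l y) && cyl s (drop l y))).
  rewrite cntw_predT (@cntw_prod l r A (cyl s)).
  have -> : 2 ^ m = 2 ^ g * (2 ^ l * 2 ^ r) by rewrite -!expnD -Hm.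
  rewrite expnD.
  have E := IH r hr.
  transitivity (2 ^ g * cntw l A * 2 ^ l * (cntw r (cyl s) * 2 ^ lens s)); first by ring.
  rewrite E; ring.
Qed.


Lemma count_le_in (T : eqType) (a b : pred T) (l : seq T) :
  {in l, forall x, a x -> b x} -> count a l <= count b l.
Proof.
elim: l => [|x l IH] //= H.
rewrite leq_add //; last by apply: IH => y hy; apply: H; rewrite inE hy orbT.
case ha: (a x) => //=; by rewrite H // inE eqxx.
Qed.

Lemma count_or_le (T : Type) (a b : pred T) l :
  count (fun x => a x || b x) l <= count a l + count b l.
Proof. by rewrite -(count_predUI a b); apply: leq_addr. Qed.

Lemma count_has_le (I T : Type) (P : I -> pred T) (s : seq I) (l : seq T) :
  count (fun x => has (fun i => P i x) s) l <= \sum_(i <- s) count (P i) l.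
Proof.
elim: s => [|i s IH] /=.
- by rewrite big_nil (@eq_count _ _ pred0) // count_pred0.
- rewrite big_cons; apply: leq_trans (count_or_le _ _ _) _.
  by rewrite leq_add2l.
Qed.

Lemma sum_bound (I : Type) (s : seq I) (f : I -> nat) k D :
  (forall i, k * f i <= D) -> k * \sum_(i <- s) f i <= size s * D.
Proof.
move=> H; elim: s => [|i s IH]; first by rewrite big_nil muln0.
by rewrite big_cons mulnDr /= mulSn leq_add.
Qed.

Lemma disj_sum_le (I T : eqType) (E : I -> pred T) (ds : seq I) (l : seq T) :
  uniq ds ->
  (forall x, x \in l -> forall d d', d \in ds -> d' \in ds -> d != d' -> E d x -> E d' x -> False) ->
  \sum_(d <- ds) count (E d) l <= count (fun x => has (fun d => E d x) ds) l.
Proof.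
elim: ds => [|d ds IH] /=; first by rewrite big_nil.
move=> /andP [dn uds] H.
rewrite big_cons.
have H' : forall x, x \in l -> forall d1 d2, d1 \in ds -> d2 \in ds -> d1 != d2 -> E d1 x -> E d2 x -> False.
  by move=> x hx d1 d2 h1 h2; apply: H => //; rewrite inE ?h1 ?h2 orbT.
apply: leq_trans (leq_add (leqnn _) (IH uds H')) _.
rewrite -(count_predUI (E d)).
have -> : count (predI (E d) (fun x => has (fun d0 => E d0 x) ds)) l = 0.
  apply/eqP; rewrite -leqn0 leqNgt -has_count; apply/hasP => -[x hx /andP [h1 /hasP [d' hd' h2]]].
  apply: (H x hx d d') => //; rewrite ?inE ?eqxx ?hd' ?orbT //.
  by apply/eqP => ed; move: dn; rewrite ed hd'.
by rewrite addn0.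
Qed.

Lemma split_val_le (T U : eqType) (a : pred T) (f : T -> U) (W : seq U) (l : seq T) :
  {in l, forall x, a x -> f x \in W} ->
  count a l <= \sum_(w <- W) count (fun x => a x && (f x == w)) l.
Proof.
elim: l => [|x l IH] H /=.
- by rewrite big1.
- rewrite big_split /=; apply: leq_add; last first.
    by apply: IH => y hy; apply: H; rewrite inE hy orbT.
  case ha: (a x) => //=.
  have hx : f x \in W by apply: H; rewrite ?inE ?eqxx.
  elim: W hx {H IH} => [|w W IHW] //.
  rewrite inE big_cons => /orP [/eqP ->|hW]; first by rewrite eqxx.
  by apply: leq_trans (IHW hW) (leq_addl _ _).
Qed.


Lemma lexlt_trans u v w : lexlt u v -> lexlt v w -> lexlt u w.
Proof.
elim: u v w => [|x u IH] [|y v] [|z w] //=.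
by case: x; case: y; case: z => //=; apply: IH.
Qed.

Lemma lexlt_irr u : ~~ lexlt u u.
Proof. by elim: u => //= x u IH; case: x. Qed.

Lemma lexlt_total u v : size u = size v -> u != v -> lexlt u v || lexlt v u.
Proof.
elim: u v => [|x u IH] [|y v] //= [] hs.
case: x; case: y => //= h; apply: IH => //; apply: contra h => /eqP ->; by [].
Qed.

Lemma lex_max n (S : seq (seq bool)) : uniq S -> all (fun w => size w == n) S -> S != [::] ->
  exists2 w, w \in S & forall u, u \in S -> u != w -> lexlt u w.
Proof.
elim: S => [|x S IH] //= /andP [xS uS] /andP [/eqP sx aS] _.
case: S IH xS uS aS => [|y S] IH xS uS aS.
  by exists x; rewrite ?inE // => u; rewrite inE => ->.
have [w wS Hw] := IH uS aS isT.
have sw : size w = n by apply/eqP; move/allP: aS; apply.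
have xw : x != w by apply: contraNneq xS => ->.
case/orP: (lexlt_total (etrans sx (esym sw)) xw) => h.
- exists w; first by rewrite inE wS orbT.
  move=> u; rewrite inE => /orP [/eqP -> //|uS'] uw; exact: Hw.
- exists x; first by rewrite inE eqxx.
  move=> u; rewrite inE => /orP [/eqP -> |uS']; first by rewrite eqxx.
  move=> ux; case: (eqVneq u w) => [-> //|uw].
  exact: lexlt_trans (Hw u uS' uw) h.
Qed.

Lemma markers_le n C t : uniq C -> all (fun w => size w == n) C ->
  count (is_marker C t) (aw n) <= t.+1.
Proof.
move=> uC aC.
set S := filter (is_marker C t) C.
have h1 : count (is_marker C t) (aw n) <= size S.
  rewrite -size_filter; apply: uniq_leq_size; first exact: filter_uniq (uniq_aw n).
  move=> x; rewrite !mem_filter => /andP [hm _]; rewrite hm /=.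
  by case/andP: hm.
apply: leq_trans h1 _.
case E: S => [|y S'] //.
have : S != [::] by rewrite E.
have uS : uniq S by exact: filter_uniq.
have aS : all (fun w => size w == n) S by rewrite all_filter; apply: sub_all aC => w h; apply/implyP => _.
move=> ne; have [w wS Hw] := lex_max uS aS ne.
rewrite -E.
have wm : is_marker C t w by move: wS; rewrite mem_filter => /andP [].
have h2 : count (predC (pred1 w)) S <= count (fun u => lexlt u w) S.
  by apply: count_le_in => u uS' /= uw; apply: Hw.
have h3 : count (fun u => lexlt u w) S <= count (fun u => lexlt u w) C.
  by rewrite count_filter; apply: sub_count => u /andP [].
have h4 : count (pred1 w) S = 1 by rewrite count_uniq_mem // wS.
have h5 := count_predC (pred1 w) S.
case/andP: wm => _ h6.
by rewrite -h5 h4 add1n ltnS; apply: leq_trans h2 (leq_trans h3 h6).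
Qed.


Lemma cntw_false m (F : pred (seq bool)) : (forall z, F z = false) -> cntw m F = 0.
Proof. by move=> H; rewrite /cntw (eq_count H) count_pred0. Qed.

Lemma cntw_le m (F G : pred (seq bool)) : (forall z, F z -> G z) -> cntw m F <= cntw m G.
Proof. by move=> H; apply: sub_count. Qed.

Lemma bound3 m n C t i : uniq C -> all (fun w => size w == n) C ->
  2 ^ n * cntw m (fun z => (i + n <= m) && is_marker C t (sub z i n)) <= t.+1 * 2 ^ m.
Proof.
move=> uC aC; case: (leqP (i + n) m) => h; last first.
  by rewrite cntw_false ?muln0 // => z; rewrite leqNgt h.
have E : cntw m (cyl [:: (i, n, is_marker C t)]) * 2 ^ n = cntw n (is_marker C t) * 2 ^ m.
  by have := @cyl_count [:: (i, n, is_marker C t)] m; rewrite /= !addn0 muln1; apply.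
apply: leq_trans (_ : cntw m (cyl [:: (i, n, is_marker C t)]) * 2 ^ n <= _).
  rewrite mulnC leq_pmul2r ?expn_gt0 //; apply: cntw_le => z /=.
  by rewrite ?h /= andbT; apply.
by rewrite E leq_pmul2r ?expn_gt0 // markers_le.
Qed.

Lemma cntw_pred1 n w : cntw n (fun y => y == w) <= 1.
Proof.
rewrite /cntw (@eq_count _ (fun y => y == w) (pred1 w)) // count_uniq_mem ?uniq_aw //.
by case: (_ \in _).
Qed.

Lemma bound2 m n i j :
  2 ^ n * cntw m (fun z => (i + n <= j) && (j + n <= m) && (sub z i n == sub z j n)) <= 2 ^ m.
Proof.
case: (boolP ((i + n <= j) && (j + n <= m))) => [/andP [h1 h2]|h]; last first.
  by rewrite cntw_false ?muln0 // => z; rewrite (negbTE h).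
set a := fun z => _.
have S := @split_val_le _ _ a (fun z => sub z i n) (aw n) (aw m).
have hS : cntw m a <= \sum_(w <- aw n) count (fun x => a x && (sub x i n == w)) (aw m).
  apply: S => z; rewrite mem_aw => /eqP sz _; rewrite mem_aw /sub size_takel //.
  by rewrite size_drop sz; lia.
have term : forall w, 2 ^ (n + n) * count (fun x => a x && (sub x i n == w)) (aw m) <= 2 ^ m.
  move=> w.
  have := @cyl_count [:: (i, n, fun y => y == w); (j - i - n, n, fun y => y == w)] m.
  rewrite /= !addn0 muln1 => /(_ ltac:(lia)) E.
  apply: leq_trans (_ : cntw m (cyl [:: (i, n, fun y => y == w); (j - i - n, n, fun y => y == w)]) * 2 ^ (n + n) <= _).
    rewrite mulnC leq_pmul2r ?expn_gt0 //; apply: cntw_le => z /=.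
    rewrite /a /= => /andP [/eqP e1 /eqP e2].
    rewrite drop_drop.
    have -> : j - i - n + (i + n) = j by lia.
    by rewrite -/(sub z i n) -/(sub z j n) -e1 e2 eqxx.
  rewrite E; rewrite -{2}(mul1n (2 ^ m)) leq_pmul2r ?expn_gt0 //.
  by rewrite -(muln1 1) leq_mul // cntw_pred1.
have := @sum_bound _ (aw n) (fun w => count (fun x => a x && (sub x i n == w)) (aw m)) _ _ term.
rewrite size_aw => hsum.
rewrite -(leq_pmul2l (expn_gt0 2 n)) mulnA -expnD.
apply: leq_trans (leq_mul (leqnn _) hS) _.
exact: hsum.
Qed.


Fixpoint wsegs q (B : pred (seq bool)) i K : seq seg :=
  if K is K'.+1 then (i, q, B) :: wsegs q B 0 K' else [::].

Lemma tot_wsegs q B i K : tot (wsegs q B i K) <= i + K * q.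
Proof.
elim: K i => [|K IH] i /=; first by [].
have := IH 0; rewrite add0n => h; rewrite mulSn; lia.
Qed.

Lemma lens_wsegs q B i K : lens (wsegs q B i K) = K * q.
Proof. by elim: K i => [|K IH] i //=; rewrite IH mulSn. Qed.

Lemma prodc_wsegs q B i K : prodc (wsegs q B i K) = cntw q B ^ K.
Proof. by elim: K i => [|K IH] i //=; rewrite IH expnS. Qed.

Lemma cyl_wsegs q (B : pred (seq bool)) K : forall i z, (forall r, r < K -> B (take q (drop (i + r * q) z))) ->
  cyl (wsegs q B i K) z.
Proof.
elim: K => [|K IH] i z H //=.
apply/andP; split; first by have := H 0 isT; rewrite mul0n addn0.
apply: IH => r hr; rewrite add0n drop_drop.
have := H r.+1 hr; rewrite mulSn.
by have -> : r * q + (i + q) = i + (q + r * q) by lia.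
Qed.

Lemma bound1 m q K i (B : pred (seq bool)) (F : pred (seq bool)) : i + K * q <= m ->
  (forall z, F z -> forall r, r < K -> B (take q (drop (i + r * q) z))) ->
  cntw m F * 2 ^ (K * q) <= cntw q B ^ K * 2 ^ m.
Proof.
move=> hm H.
have := @cyl_count (wsegs q B i K) m (leq_trans (tot_wsegs q B i K) hm).
rewrite lens_wsegs prodc_wsegs => <-.
rewrite leq_pmul2r ?expn_gt0 //; apply: cntw_le => z hz.
by apply: cyl_wsegs => r hr; apply: H.
Qed.

Lemma mu_disj n C x d d' : mu_code n C -> d < d' -> d' < n ->
  sub x d n \in C -> sub x d' n \in C -> False.
Proof.
move=> hmu h1 h2 hv hu.
set k := n - (d' - d).
have kin : k \in iota 0 n by rewrite mem_iota; lia.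
move/allP: hmu => /(_ _ hu) /allP /(_ _ hv) /allP /(_ _ kin).
have -> : 0 < k by rewrite /k; lia.
rewrite /= => /negP; apply.
have -> : n - k = d' - d by rewrite /k; lia.
rewrite /sub take_takel; last by rewrite /k; lia.
have := take_drop k (d' - d) (drop d x).
have -> : k + (d' - d) = n by rewrite /k; lia.
move=> <-; rewrite drop_drop.
by have -> : d' - d + d = d' by lia.
Qed.

Definition Bp n (C : seq (seq bool)) (x : seq bool) :=
  all (fun d => sub x d n \notin C) (iota 0 n).

Lemma cntw_memC n C : uniq C -> all (fun w => size w == n) C ->
  cntw n (fun y => y \in C) = size C.
Proof.
move=> uC aC; rewrite /cntw -size_filter; apply: perm_size.
apply: uniq_perm; [exact: filter_uniq (uniq_aw n)| exact: uC|].
move=> x; rewrite mem_filter mem_aw.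
case xC: (x \in C) => //=.
by move/allP: aC => /(_ _ xC).
Qed.

Lemma Bp_bound n C : 0 < n -> uniq C -> all (fun w => size w == n) C -> mu_code n C ->
  2 ^ n <= 32 * n * size C -> 32 * cntw (2 * n - 1) (Bp n C) <= 31 * 2 ^ (2 * n - 1).
Proof.
move=> n0 uC aC hmu hC.
set q := 2 * n - 1.
pose E := fun d (x : seq bool) => sub x d n \in C.
have hc := count_predC (Bp n C) (aw q); rewrite size_aw in hc.
have e1 : count (predC (Bp n C)) (aw q) = count (fun x => has (fun d => E d x) (iota 0 n)) (aw q).
  by apply: eq_count => x; rewrite /= /Bp -has_predC; apply: eq_has => d /=; rewrite negbK.
have h1 : \sum_(d <- iota 0 n) count (E d) (aw q) <= count (predC (Bp n C)) (aw q).
  rewrite e1; apply: disj_sum_le; first exact: iota_uniq.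
  move=> x _ d d'; rewrite !mem_iota /= !add0n => hd hd' ne.
  case: (ltngtP d d') => [lt|lt|eq]; last by move: ne; rewrite eq eqxx.
  - by move=> Ed Ed'; apply: (mu_disj hmu lt hd' Ed Ed').
  - by move=> Ed Ed'; apply: (mu_disj hmu lt hd Ed' Ed).
have h2 : 2 ^ n * \sum_(d <- iota 0 n) count (E d) (aw q) = n * (size C * 2 ^ q).
  rewrite big_distrr /=.
  rewrite (eq_big_seq (fun _ => size C * 2 ^ q)); last first.
    move=> d; rewrite mem_iota add0n => hd.
    have := @cyl_count [:: (d, n, fun y => y \in C)] q.
    rewrite /= !addn0 muln1 => /(_ ltac:(rewrite /q; lia)).
    rewrite cntw_memC // => <-.
    rewrite mulnC; congr (_ * _); apply: eq_count => x /=; by rewrite andbT.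
  by rewrite big_const_seq count_predT size_iota iter_addn_0 mulnC.
have h3 : 2 ^ n * 2 ^ q <= 2 ^ n * (32 * count (predC (Bp n C)) (aw q)).
  apply: leq_trans (leq_mul hC (leqnn (2 ^ q))) _.
  have -> : 32 * n * size C * 2 ^ q = 32 * (2 ^ n * \sum_(d <- iota 0 n) count (E d) (aw q)).
    by rewrite h2; ring.
  by rewrite mulnCA; apply: leq_mul => //; apply: leq_mul.
rewrite leq_pmul2l ?expn_gt0 // in h3.
rewrite /cntw; lia.
Qed.


Lemma expn_pow m n : m ^ n = Nat.pow m n.
Proof. by elim: n => //= n IH; rewrite expnS IH. Qed.

Lemma transferN x y k e :
  (N.of_nat x ^ N.of_nat k * N.of_nat 2 ^ N.of_nat e <= N.of_nat y ^ N.of_nat k)%num ->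
  x ^ k * 2 ^ e <= y ^ k.
Proof.
move=> H; apply/leP; apply PeanoNat.Nat.compare_le_iff.
rewrite Nat2N.inj_compare Nat2N.inj_mul !expn_pow !Nat2N.inj_pow.
exact H.
Qed.

Lemma bignum : 31 ^ 256 * 2 ^ 10 <= 32 ^ 256.
Proof. apply: (@transferN 31 32 256 10); apply N.leb_le; vm_compute; reflexivity. Qed.

Lemma pow_mono a b k : a <= b -> a ^ k <= b ^ k.
Proof. by move=> h; elim: k => [|k IH] //; rewrite !expnS leq_mul. Qed.

Lemma ineqA x y l m p : x <= y -> x ^ 256 * 2 ^ 10 <= y ^ 256 -> 100 <= l -> m <= 2 ^ l ->
  p = l %/ 8 -> 3 * 2 ^ p.+1 * m.+1 * x ^ (32 * l) <= y ^ (32 * l).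
Proof.
move=> xy hxy hl hm hp.
have hl8 := divn_eq l 8; have hr := ltn_pmod l (isT : 0 < 8).
rewrite -hp in hl8.
have hm1 : m.+1 <= 2 ^ l.+1.
  by rewrite expnS mul2n -addnn -addn1; apply: leq_add => //; exact: expn_gt0.
have s1 : 3 * 2 ^ p.+1 * m.+1 <= 2 ^ (10 * p).
  apply: leq_trans (_ : 2 ^ 2 * 2 ^ p.+1 * 2 ^ l.+1 <= _).
    by apply: leq_mul => //; apply: leq_mul.
  rewrite -!expnD leq_exp2l //; lia.
have e1 : 32 * l = 256 * p + 32 * (l %% 8) by clear -hl8; lia.
rewrite e1 (expnD x) (expnD y) (expnM x 256 p) (expnM y 256 p) (expnM x 32) (expnM y 32) mulnA.
apply: leq_mul; last by apply: pow_mono; apply: pow_mono.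
apply: leq_trans (leq_mul s1 (leqnn _)) _.
rewrite mulnC (expnM 2 10 p) -expnMn; apply: pow_mono; exact: hxy.
Qed.

Lemma ineqB c l m p : 3 <= c -> 100 <= l -> m <= 2 ^ l -> p = l %/ 8 ->
  3 * 2 ^ p.+1 * m.+1 * m.+1 <= 2 ^ (c * l).
Proof.
move=> hc hl hm hp.
have hl8 := divn_eq l 8; rewrite -hp in hl8.
have hm1 : m.+1 <= 2 ^ l.+1.
  by rewrite expnS mul2n -addnn -addn1; apply: leq_add => //; exact: expn_gt0.
apply: leq_trans (_ : 2 ^ 2 * 2 ^ p.+1 * 2 ^ l.+1 * 2 ^ l.+1 <= _).
  by apply: leq_mul => //; apply: leq_mul => //; apply: leq_mul.
rewrite -!expnD leq_exp2l //; nia.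
Qed.

Lemma card_cntw m (P : pred (seq bool)) :
  #|[set z : m.-tuple bool | P z]| = cntw m P.
Proof.
rewrite cardsE cardE /enum_mem size_filter -enumT.
rewrite (@eq_count _ _ (fun z : m.-tuple bool => P (val z))); last by move=> z; rewrite !inE.
rewrite -(count_map val P) /cntw.
apply/permP; apply: uniq_perm.
- by rewrite (map_inj_uniq val_inj) enum_uniq.
- exact: uniq_aw.
- move=> w; rewrite mem_aw; apply/mapP/idP => [[z _ ->]|h]; first by rewrite size_tuple.
  by exists (Tuple h); rewrite ?mem_enum.
Qed.


Theorem theorem7 :
  forall c : nat, 3 <= c ->
  exists a b M : nat, 0 < a /\ 0 < b /\
  forall (m t : nat) (C : seq (seq bool)),
    M <= m -> 1 <= t -> t < m ->
    uniq C ->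
    all (fun w => size w == c * lg m) C ->
    mu_code (c * lg m) C ->
    2 ^ (c * lg m) <= beta * (c * lg m) * size C ->
    #|[set z : m.-tuple bool | ~~ legit c m t C z]| ^ b * m ^ a <= (2 ^ m) ^ b.
Proof.
move=> c hc; exists 1, 8, (2 ^ 100); split => //; split => //.
move=> m t C hM ht htm uC aC hmu hsz.
have hml : m <= 2 ^ lg m by rewrite /lg; exact: up_logP.
have hl : 100 <= lg m.
  by rewrite -(leq_exp2l 100 (lg m) (isT : 1 < 2)); apply: leq_trans hM hml.
rewrite (card_cntw m (fun z => ~~ legit c m t C z)).
have hL : ell c m = 64 * (lg m * (c * lg m)) + c * lg m - 1.
  by rewrite /ell /beta expnS expn1; nia.
move: hL hml hl hsz hmu aC.
rewrite /legit -/(ell c m).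
set l := lg m; set n := c * l; set L := ell c m.
move=> hL hml hl hsz hmu aC.
have n0 : 0 < n by rewrite /n; nia.
have hn3 : 3 * l <= n by rewrite /n; nia.
clear hM.
have hsz' : 2 ^ n <= 32 * n * size C by [].
set q := 2 * n - 1.
set K := 32 * l.
have hKq : K * q <= L by rewrite hL /K /q; nia.
pose I := iota 0 m.+1.
pose f1 i z := (i + L <= m) && ~~ has (fun j => (j + n <= L) && (sub z (i + j) n \in C)) (iota 0 L).
pose f2 i j z := (i + n <= j) && (j + n <= m) && (sub z i n == sub z j n).
pose f3 i z := (i + n <= m) && is_marker C t (sub z i n).
set X := cntw m _.
have hX : X <= \sum_(i <- I) cntw m (f1 i) + \sum_(i <- I) \sum_(j <- I) cntw m (f2 i j)
              + \sum_(i <- I) cntw m (f3 i).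
  apply: leq_trans (_ : cntw m (fun z => has (fun i => f1 i z) I || has (fun i => has (fun j => f2 i j z) I) I
                         || has (fun i => f3 i z) I) <= _).
    apply: count_le_in => z; rewrite mem_aw => /eqP sz.
    apply: contraR => /norP [/norP [h1 h2] h3].
    move/hasPn: h1 => h1. move/hasPn: h2 => h2. move/hasPn: h3 => h3.
    rewrite sz; apply/and3P; split; apply/allP => i hi.
    - apply/implyP => hiL; move: (h1 i hi); rewrite /f1 hiL /=; exact: negbNE.
    - apply/allP => j hj; apply/implyP => hij.
      have h2' := h2 i hi; move/hasPn: h2' => h2'.
      by have := h2' j hj; rewrite /f2 hij.
    - apply/implyP => hin; move: (h3 i hi); by rewrite /f3 hin.
  apply: leq_trans (count_or_le _ _ _) _; apply: leq_add; last exact: count_has_le.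
  apply: leq_trans (count_or_le _ _ _) _; apply: leq_add; first exact: count_has_le.
  apply: leq_trans (count_has_le _ _ _) _; apply: leq_sum => i _; exact: count_has_le.
have hBp : 32 * cntw q (Bp n C) <= 31 * 2 ^ q by apply: Bp_bound.
have hS1 : 32 ^ K * \sum_(i <- I) cntw m (f1 i) <= size I * (31 ^ K * 2 ^ m).
  apply: sum_bound => i.
  case: (leqP (i + L) m) => hiL; last first.
    by rewrite cntw_false ?muln0 // => z; rewrite /f1 leqNgt hiL.
  have blk : forall z, f1 i z -> forall r, r < K -> Bp n C (take q (drop (i + r * q) z)).
    move=> z /andP [_ hz] r hr; apply/allP => d; rewrite mem_iota add0n => hd.
    have hrK : r.+1 * q <= K * q by rewrite leq_mul2r hr orbT.
    rewrite mulSn in hrK.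
    have hq : q = 2 * n - 1 by [].
    have hj : r * q + d \in iota 0 L by rewrite mem_iota; lia.
    have hjn : r * q + d + n <= L by lia.
    move/hasPn: hz => /(_ _ hj); rewrite hjn /=.
    have e : sub (take q (drop (i + r * q) z)) d n = sub z (i + (r * q + d)) n.
      rewrite /sub.
      have := take_drop (q - d) d (drop (i + r * q) z).
      rewrite subnK; last by lia.
      move=> <-; rewrite take_takel; last by lia.
      rewrite drop_drop.
      by have -> : d + (i + r * q) = i + (r * q + d) by lia.
    by rewrite e.
  have hb := @bound1 m q K i (Bp n C) (f1 i) (leq_trans (leq_add (leqnn i) hKq) hiL) blk.
  rewrite -(@leq_pmul2r (2 ^ (K * q))) ?expn_gt0 //.
  apply: leq_trans (_ : 32 ^ K * (cntw q (Bp n C) ^ K * 2 ^ m) <= _).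
    by rewrite -mulnA leq_mul2l hb orbT.
  rewrite mulnA -expnMn.
  apply: leq_trans (leq_mul (pow_mono K hBp) (leqnn _)) _.
  rewrite expnMn (mulnC K q) expnM.
  by apply: eq_leq; ring.
have hS2 : 2 ^ n * \sum_(i <- I) \sum_(j <- I) cntw m (f2 i j) <= size I * (size I * 2 ^ m).
  apply: sum_bound => i; apply: sum_bound => j; exact: bound2.
have hS3 : 2 ^ n * \sum_(i <- I) cntw m (f3 i) <= size I * (t.+1 * 2 ^ m).
  apply: sum_bound => i; exact: bound3.
rewrite size_iota in hS1 hS2 hS3.
set S1 := \sum_(i <- I) cntw m (f1 i) in hX hS1.
set S2 := \sum_(i <- I) \sum_(j <- I) cntw m (f2 i j) in hX hS2.
set S3 := \sum_(i <- I) cntw m (f3 i) in hX hS3.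
set p := l %/ 8.
set Y := 2 ^ p.+1.
have hA : 3 * Y * m.+1 * 31 ^ K <= 32 ^ K by apply: (ineqA (isT : 31 <= 32) bignum hl hml).
have hB : 3 * Y * m.+1 * m.+1 <= 2 ^ n by apply: (ineqB hc hl hml).
have t1 : 3 * Y * S1 <= 2 ^ m.
  rewrite -(@leq_pmul2l (32 ^ K)) ?expn_gt0 //.
  have -> : 32 ^ K * (3 * Y * S1) = 3 * Y * (32 ^ K * S1) by ring.
  apply: leq_trans (leq_mul (leqnn (3 * Y)) hS1) _.
  have -> : 3 * Y * (m.+1 * (31 ^ K * 2 ^ m)) = 3 * Y * m.+1 * 31 ^ K * 2 ^ m by ring.
  by rewrite leq_mul2r hA orbT.
have t2 : 3 * Y * S2 <= 2 ^ m.
  rewrite -(@leq_pmul2l (2 ^ n)) ?expn_gt0 //.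
  have -> : 2 ^ n * (3 * Y * S2) = 3 * Y * (2 ^ n * S2) by ring.
  apply: leq_trans (leq_mul (leqnn (3 * Y)) hS2) _.
  have -> : 3 * Y * (m.+1 * (m.+1 * 2 ^ m)) = 3 * Y * m.+1 * m.+1 * 2 ^ m by ring.
  by rewrite leq_mul2r hB orbT.
have t3 : 3 * Y * S3 <= 2 ^ m.
  rewrite -(@leq_pmul2l (2 ^ n)) ?expn_gt0 //.
  have -> : 2 ^ n * (3 * Y * S3) = 3 * Y * (2 ^ n * S3) by ring.
  apply: leq_trans (leq_mul (leqnn (3 * Y)) hS3) _.
  have -> : 3 * Y * (m.+1 * (t.+1 * 2 ^ m)) = 3 * Y * m.+1 * t.+1 * 2 ^ m by ring.
  rewrite leq_mul2r; apply/orP; right; apply: leq_trans hB.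
  by rewrite leq_mul2l ltnS ltnW // orbT.
have hXY : X * Y <= 2 ^ m.
  rewrite -(@leq_pmul2l 3) //.
  have -> : 3 * (X * Y) = 3 * Y * X by ring.
  apply: leq_trans (leq_mul (leqnn (3 * Y)) hX) _.
  rewrite !mulnDr.
  have -> : 3 * 2 ^ m = 2 ^ m + 2 ^ m + 2 ^ m by ring.
  by apply: leq_add; [apply: leq_add|].
have hmY : m <= Y ^ 8.
  apply: leq_trans hml _; rewrite /Y -expnM leq_exp2l //.
  have := divn_eq l 8; have := ltn_pmod l (isT : 0 < 8); rewrite -/p; lia.
rewrite expn1.
apply: leq_trans (leq_mul (leqnn (X ^ 8)) hmY) _.
by rewrite -expnMn; apply: pow_mono.
Qed.
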